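(* Let $n\geq 4$ and let $\tau: T_n\to \mathrm{GL}_{n+1}(\mathbb{C})$ be a homogeneous $3$-local representation of the twin group $T_n$. Then $\tau$ is equivalent to one of the eleven representations $\tau_j$, $1\leq j\leq 11$, defined by $\tau_j(s_i)=\mathrm{diag}(I_{i-1},M_j,I_{n-i-1})$ for all $1\leq i\leq n-1$, where (1) $M_1=\begin{pmatrix}1&0&0\\ d&-1&f\\ 0&0&1\end{pmatrix}$, with $d,f\in\mathbb{C}$; (2) $M_2=\begin{pmatrix}1&0&0\\ 0&-\sqrt{1-fh}&f\\ 0&h&\sqrt{1-fh}\end{pmatrix}$, with $h,f\in\mathbb{C}$; (3) $M_3=\begin{pmatrix}1&0&0\\ 0&\sqrt{1-fh}&f\\ 0&h&-\sqrt{1-fh}\end{pmatrix}$, with $h,f\in\mathbb{C}$; (4) $M_4=\begin{pmatrix}1&b&0\\ 0&-1&0\\ 0&h&1\end{pmatrix}$, with $b,h\in\mathbb{C}$; (5) $M_5=\begin{pmatrix}-\sqrt{1-bd}&b&0\\ d&\sqrt{1-bd}&0\\ 0&0&1\end{pmatrix}$, with $b,d\in\mathbb{C}$; (6) $M_6=\begin{pmatrix}\sqrt{1-bd}&b&0\\ d&-\sqrt{1-bd}&0\\ 0&0&1\end{pmatrix}$, with $b,d\in\mathbb{C}$; (7) $M_7=\mathrm{diag}(1,-1,-1)$; (8) $M_8=\mathrm{diag}(-1,-1,1)$; (9) $M_9=\mathrm{diag}(1,1,1)$; (10) $M_{10}=\mathrm{diag}(-1,-1,-1)$; (11) $M_{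11}=\mathrm{diag}(-1,1,-1)$.
   Context: The twin group $T_n$ ($n\geq 2$) is the group with generators $s_1,\dots,s_{n-1}$ and defining relations $s_i^2=1$ for $1\leq i\leq n-1$ and $s_is_j=s_js_i$ for $|i-j|\geq 2$. A representation $\tau:T_n\to\mathrm{GL}_{n+1}(\mathbb{C})$ is called homogeneous $3$-local if there is a single matrix $M\in\mathrm{GL}_3(\mathbb{C})$ such that $\tau(s_i)=\mathrm{diag}(I_{i-1},M,I_{n-i-1})$ (block-diagonal, with $I_r$ the $r\times r$ identity) for all $1\leq i\leq n-1$. For a complex number $z$, $\sqrt{z}$ denotes a fixed choice of square root. Two representations are equivalent if they are conjugate by an invertible matrix. *)

(* Defs.v *)
From HB Require Import structures.
From mathcomp Require Import all_boot all_order all_algebra.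
From mathcomp Require Import complex.
From mathcomp Require Import reals.
Set Implicit Arguments. Unset Strict Implicit. Unset Printing Implicit Defensive.
Import Order.TTheory GRing.Theory Num.Theory.
Local Open Scope ring_scope.

(* The field of complex numbers: R[i] for R a model of the real numbers
   (any [realType]); it is a numClosedFieldType, with the fixed square root
   [sqrtC]. *)

Definition mx3 {C : nzRingType} (a11 a12 a13 a21 a22 a23 a31 a32 a33 : C) : 'M[C]_3 :=
  \matrix_(r < 3, c < 3)
    nth 0 (nth [::] [:: [:: a11; a12; a13]; [:: a21; a22; a23]; [:: a31; a32; a33]] r) c.

(* tau(s_i) = diag(I_{i-1}, M, I_{n-i-1}) in 'M_(n+1), for 1 <= i <= n-1.
   With 0-based indices, the block M occupies rows/columns i-1, i, i+1. *)
Definition local_mx {C : nzRingType} (n : nat) (M : 'M[C]_3) (i : nat) : 'M[C]_(n.+1) :=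
  \matrix_(r, c)
    if [&& i.-1 <= r <= i.+1 & i.-1 <= c <= i.+1]%N
    then M (inord (r - i.-1)) (inord (c - i.-1))
    else (r == c)%:R.

(* The assignment s_i |-> local_mx n M i (1 <= i <= n-1), with M in GL_3,
   defines a representation T_n -> GL_{n+1}: it respects the defining
   relations of the twin group T_n (presentation: s_i^2 = 1, s_i s_j = s_j s_i
   for |i - j| >= 2). *)
Definition hom3local_rep {C : comUnitRingType} (n : nat) (M : 'M[C]_3) : Prop :=
  M \in unitmx /\
  (forall i, (1 <= i <= n.-1)%N -> local_mx n M i *m local_mx n M i = 1%:M) /\
  (forall i j, (1 <= i <= n.-1)%N -> (1 <= j <= n.-1)%N -> (i + 2 <= j)%N ->
     local_mx n M i *m local_mx n M j = local_mx n M j *m local_mx n M i).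

(* Equivalence of the homogeneous 3-local representations given by M and N:
   conjugate by an invertible P on every generator (hence on all of T_n). *)
Definition equiv_local {C : comUnitRingType} (n : nat) (M N : 'M[C]_3) : Prop :=
  exists P : 'M[C]_(n.+1), P \in unitmx /\
    forall i, (1 <= i <= n.-1)%N ->
      P *m local_mx n M i *m invmx P = local_mx n N i.

Section Mats.
Variable C : numClosedFieldType.
Definition M1 (d f : C) := mx3 1 0 0 d (-1) f 0 0 1.
Definition M2 (h f : C) := mx3 1 0 0 0 (- sqrtC (1 - f * h)) f 0 h (sqrtC (1 - f * h)).
Definition M3 (h f : C) := mx3 1 0 0 0 (sqrtC (1 - f * h)) f 0 h (- sqrtC (1 - f * h)).
Definition M4 (b h : C) := mx3 1 b 0 0 (-1) 0 0 h 1.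
Definition M5 (b d : C) := mx3 (- sqrtC (1 - b * d)) b 0 d (sqrtC (1 - b * d)) 0 0 0 1.
Definition M6 (b d : C) := mx3 (sqrtC (1 - b * d)) b 0 d (- sqrtC (1 - b * d)) 0 0 0 1.
Definition M7 : 'M[C]_3 := mx3 1 0 0 0 (-1) 0 0 0 (-1).
Definition M8 : 'M[C]_3 := mx3 (-1) 0 0 0 (-1) 0 0 0 1.
Definition M9 : 'M[C]_3 := mx3 1 0 0 0 1 0 0 0 1.
Definition M10 : 'M[C]_3 := mx3 (-1) 0 0 0 (-1) 0 0 0 (-1).
Definition M11 : 'M[C]_3 := mx3 (-1) 0 0 0 1 0 0 0 (-1).
End Mats.

(* Main.v *)
Require Import Defs.
From HB Require Import structures.
From mathcomp Require Import all_boot all_order all_algebra.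
From mathcomp Require Import complex.
From mathcomp Require Import reals.
From mathcomp Require Import ring.
Import Order.TTheory GRing.Theory Num.Theory.
Local Open Scope ring_scope.

Section Alg.
Variable C : numClosedFieldType.
Implicit Types x y z L k : C.

Lemma toz x y : x = y -> x - y = 0.
Proof. by move=> ->; rewrite subrr. Qed.
Lemma lc x y L : L = 0 -> x - y = L -> x = y.
Proof. by move=> -> /eqP; rewrite subr_eq0 => /eqP. Qed.
Lemma mul0 x y : x * y = 0 -> x = 0 \/ y = 0.
Proof. by move/eqP; rewrite mulf_eq0 => /orP [] /eqP; [left|right]. Qed.
Lemma mul0r' x y : x * y = 0 -> y != 0 -> x = 0.
Proof. by case/mul0 => // -> /eqP. Qed.
Lemma sq0 x : x * x = 0 -> x = 0.
Proof. by case/mul0. Qed.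
Lemma sq1 x : x * x = 1 -> x = 1 \/ x = -1.
Proof. by move=> H; have := sqrf_eq1 x; rewrite expr2 H eqxx => /esym/orP [] /eqP; [left|right]. Qed.
Lemma sqs x y : x * x = y -> x = sqrtC y \/ x = - sqrtC y.
Proof.
move=> H; have := eqf_sqr x (sqrtC y); rewrite sqrtCK expr2 H eqxx.
by move=> /esym/orP [] /eqP; [left|right].
Qed.
Lemma two_neq0 : (1 + 1 : C) != 0.
Proof. by rewrite -(natrD C 1 1) pnatr_eq0. Qed.

Arguments lc {x y L}. Arguments mul0r' {x y}. Arguments sq1 {x}. Arguments sqs {x y}. Arguments sq0 {x}. Arguments toz {x y}. Arguments mul0 {x y}.
Lemma alg (P : 'M[C]_3 -> 'M[C]_3 -> Prop) (Prefl : forall N, P N N)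
  (a b c d e f g h j : C) :
  a*a + b*d + c*g = 1 -> a*b + b*e + c*h = 0 -> d*a + e*d + f*g = 0 ->
  d*b + e*e + f*h = 1 -> d*c + e*f + f*j = 0 -> g*b + h*e + j*h = 0 ->
  g*c + h*f + j*j = 1 ->
  c*c = 0 -> 0 = g*g -> f*a = f -> f*b = 0 -> j*b = b -> h = a*h -> 0 = d*h ->
  d = d*j ->
  let X := mx3 a b c d e f g h j in
  (exists d f, P X (M1 d f)) \/
  (exists h f, P X (M2 h f)) \/
  (exists h f, P X (M3 h f)) \/
  (exists b h, P X (M4 b h)) \/
  (exists b d, P X (M5 b d)) \/
  (exists b d, P X (M6 b d)) \/
  P X (M7 _) \/ P X (M8 _) \/ P X (M9 _) \/ P X (M10 _) \/ P X (M11 _).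
Proof.
move=> /toz S00 /toz S01 /toz S10 /toz S11 /toz S12 /toz S21 /toz S22
  /sq0 c0 /esym /sq0 g0 /toz C12 C13 /toz C23 /toz C21 C31 /toz C32 X.
subst c g X.
case: (eqVneq a 1) => [a1|Ha].
- subst a.
  have bd0 : b * d = 0 by apply: (lc S00); ring.
  case: (eqVneq j 1) => [j1|Hj].
  + subst j.
    have hf0 : h * f = 0 by apply: (lc S22); ring.
    have be : b * (1 + e) = 0 by apply: (lc S01); ring.
    have de : d * (1 + e) = 0 by apply: (lc S10); ring.
    have fe : f * (1 + e) = 0 by apply: (lc S12); ring.
    have he : h * (1 + e) = 0 by apply: (lc S21); ring.
    have ee : e * e = 1.
      apply: (lc (L := (d*b + e*e + f*h - 1) - b*d - h*f)); first by rewrite S11 bd0 hf0 !subr0.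
      ring.
    case: (sq1 ee) => ev; subst e.
    * have t := two_neq0.
      rewrite (mul0r' be t) (mul0r' de t) (mul0r' fe t) (mul0r' he t).
      by do 8 right; left; exact: Prefl.
    * case: (eqVneq d 0) => [d0|dn0].
      - case: (eqVneq f 0) => [f0|fn0].
        + by subst; do 3 right; left; exists b, h; exact: Prefl.
        + have b0 : b = 0 by move: C13; rewrite mulrC => /mul0r'; apply.
          have h0 : h = 0 by apply: mul0r' hf0 fn0.
          by subst; left; exists 0, f; exact: Prefl.
      - have b0 : b = 0 by apply: mul0r' bd0 dn0.
        have h0 : h = 0 by move/esym: C31; rewrite mulrC => /mul0r'; apply.
        by subst; left; exists d, f; exact: Prefl.
  + have jn : j - 1 != 0 by rewrite subr_eq0.
    have b0 : b = 0 by apply: (mul0r' (y := j - 1)) => //; apply: (lc C23); ring.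
    have d0 : d = 0 by apply: (mul0r' (y := j - 1)) => //; apply: (lc (L := - (d - d*j))); [by rewrite C32 oppr0|ring].
    subst b d.
    have fe : f * (e + j) = 0 by apply: (lc S12); ring.
    have he : h * (e + j) = 0 by apply: (lc S21); ring.
    case: (eqVneq (e + j) 0) => [ej|ejn].
    * have ee : e = - j by apply: (lc ej); ring.
      have jj : j * j = 1 - f * h by apply: (lc S22); ring.
      case: (sqs jj) => jv; rewrite ee jv.
      - by right; left; exists h, f; exact: Prefl.
      - by do 2 right; left; exists h, f; rewrite opprK; exact: Prefl.
    * have f0 := mul0r' fe ejn; have h0 := mul0r' he ejn; subst f h.
      have jj : j * j = 1 by apply: (lc S22); ring.
      have ee : e * e = 1 by apply: (lc S11); ring.
      case: (sq1 jj) => jv; first by rewrite jv eqxx in Hj.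
      case: (sq1 ee) => ev; subst.
      - by rewrite subrr eqxx in ejn.
      - by do 6 right; left; exact: Prefl.
- have an : a - 1 != 0 by rewrite subr_eq0.
  have f0 : f = 0 by apply: (mul0r' (y := a - 1)) => //; apply: (lc C12); ring.
  have h0 : h = 0 by apply: (mul0r' (y := a - 1)) => //; apply: (lc (L := - (h - a*h))); [by rewrite C21 oppr0|ring].
  subst f h.
  have jj : j * j = 1 by apply: (lc S22); ring.
  case: (eqVneq j 1) => [j1|Hj].
  + subst j.
    have be : b * (a + e) = 0 by apply: (lc S01); ring.
    have de : d * (a + e) = 0 by apply: (lc S10); ring.
    case: (eqVneq (a + e) 0) => [ae|aen].
    * have ee : e = - a by apply: (lc ae); ring.
      have aa : a * a = 1 - b * d by apply: (lc S00); ring.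
      case: (sqs aa) => av; rewrite ee av.
      - by do 5 right; left; exists b, d; exact: Prefl.
      - by do 4 right; left; exists b, d; rewrite opprK; exact: Prefl.
    * have b0 := mul0r' be aen; have d0 := mul0r' de aen; subst b d.
      have aa : a * a = 1 by apply: (lc S00); ring.
      have ee : e * e = 1 by apply: (lc S11); ring.
      case: (sq1 aa) => av; first by rewrite av eqxx in Ha.
      case: (sq1 ee) => ev; subst.
      - by rewrite addNr eqxx in aen.
      - by do 7 right; left; exact: Prefl.
  + have jn : j - 1 != 0 by rewrite subr_eq0.
    have b0 : b = 0 by apply: (mul0r' (y := j - 1)) => //; apply: (lc C23); ring.
    have d0 : d = 0 by apply: (mul0r' (y := j - 1)) => //; apply: (lc (L := - (d - d*j))); [by rewrite C32 oppr0|ring].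
    subst b d.
    have aa : a * a = 1 by apply: (lc S00); ring.
    have ee : e * e = 1 by apply: (lc S11); ring.
    case: (sq1 aa) => av; first by rewrite av eqxx in Ha.
    case: (sq1 jj) => jv; first by rewrite jv eqxx in Hj.
    case: (sq1 ee) => ev; subst.
    - by do 10 right; exact: Prefl.
    - by do 9 right; left; exact: Prefl.
Qed.
End Alg.
Lemma mul_entry5 (C : nzRingType) N (A B : 'M[C]_N.+1) (r c : 'I_N.+1) :
  (5 <= N.+1)%N ->
  (forall j : 'I_N.+1, (5 <= j)%N -> A r j = 0) ->
  (A *m B) r c = \sum_(j < 5) A r (inord j) * B (inord j) c.
Proof.
move=> HN H; rewrite mxE.
rewrite (bigID (fun j : 'I_N.+1 => (j < 5)%N)) /= [X in _ + X]big1 ?addr0; last first.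
  by move=> j; rewrite -leqNgt => /H ->; rewrite mul0r.
rewrite (big_ord_widen_cond (N.+1) xpredT (fun j => A r (inord j) * B (inord j) c)) //.
by apply: eq_bigr => j _; rewrite inord_val.
Qed.
Lemma local_zero (C : nzRingType) k (M : 'M[C]_3) i (r j : 'I_(k.+4).+1) :
  (i <= 3)%N -> (r < 5)%N -> (5 <= j)%N -> local_mx k.+4 M i r j = 0.
Proof.
move=> Hi Hr Hj; rewrite mxE.
have -> : (j <= i.+1)%N = false by apply/negbTE; rewrite -ltnNge; apply: leq_trans Hj; rewrite ltnS.
rewrite !andbF /=.
have -> : (r == j) = false by apply/negbTE; rewrite neq_ltn (leq_trans Hr Hj).
by [].
Qed.

Lemma inord_eq N a b : (a < N.+1)%N -> (b < N.+1)%N ->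
  (inord a == inord b :> 'I_N.+1) = (a == b).
Proof. by move=> Ha Hb; rewrite -val_eqE /= !inordK. Qed.

Ltac simp E := rewrite /= !mul_entry5 // in E; try (by move=> j Hj; rewrite local_zero // inordK);
  rewrite !big_ord_recr !big_ord0 /= !mxE /= !inordK //= ?inord_eq //= ?subnE /= in E;
  rewrite ?mulr0 ?mul0r ?mulr1 ?mul1r ?addr0 ?add0r in E.

Lemma mx3_eta (C : nzRingType) (M : 'M[C]_3) :
  M = mx3 (M (inord 0) (inord 0)) (M (inord 0) (inord 1)) (M (inord 0) (inord 2))
          (M (inord 1) (inord 0)) (M (inord 1) (inord 1)) (M (inord 1) (inord 2))
          (M (inord 2) (inord 0)) (M (inord 2) (inord 1)) (M (inord 2) (inord 2)).
Proof.
apply/matrixP => r c; rewrite mxE.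
have er : r = inord r by rewrite inord_val.
have ec : c = inord c by rewrite inord_val.
by case: r c er ec => [[|[|[|r]]] Hr] [[|[|[|c]]] Hc] //= -> ->.
Qed.

Theorem theorem3p1 (R : realType) (n : nat) (M : 'M[R[i]]_3) :
  (4 <= n)%N -> hom3local_rep n M ->
  (exists d f, equiv_local n M (M1 d f)) \/
  (exists h f, equiv_local n M (M2 h f)) \/
  (exists h f, equiv_local n M (M3 h f)) \/
  (exists b h, equiv_local n M (M4 b h)) \/
  (exists b d, equiv_local n M (M5 b d)) \/
  (exists b d, equiv_local n M (M6 b d)) \/
  equiv_local n M (M7 _) \/
  equiv_local n M (M8 _) \/
  equiv_local n M (M9 _) \/
  equiv_local n M (M10 _) \/
  equiv_local n M (M11 _).
Proof.
case: n => [|[|[|[|k]]]] // _ [_ [Hsq Hcm]].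
have H1 := Hsq 1%N isT.
have H := Hcm 1%N 3%N isT isT isT.
have S00 := congr1 (fun A : 'M_((k.+4).+1) => A (inord 0) (inord 0)) H1. simp S00.
have S01 := congr1 (fun A : 'M_((k.+4).+1) => A (inord 0) (inord 1)) H1. simp S01.
have S10 := congr1 (fun A : 'M_((k.+4).+1) => A (inord 1) (inord 0)) H1. simp S10.
have S11 := congr1 (fun A : 'M_((k.+4).+1) => A (inord 1) (inord 1)) H1. simp S11.
have S12 := congr1 (fun A : 'M_((k.+4).+1) => A (inord 1) (inord 2)) H1. simp S12.
have S21 := congr1 (fun A : 'M_((k.+4).+1) => A (inord 2) (inord 1)) H1. simp S21.
have S22 := congr1 (fun A : 'M_((k.+4).+1) => A (inord 2) (inord 2)) H1. simp S22.
have C04 := congr1 (fun A : 'M_((k.+4).+1) => A (inord 0) (inord 4)) H. simp C04.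
have C40 := congr1 (fun A : 'M_((k.+4).+1) => A (inord 4) (inord 0)) H. simp C40.
have C12 := congr1 (fun A : 'M_((k.+4).+1) => A (inord 1) (inord 2)) H. simp C12.
have C13 := congr1 (fun A : 'M_((k.+4).+1) => A (inord 1) (inord 3)) H. simp C13.
have C23 := congr1 (fun A : 'M_((k.+4).+1) => A (inord 2) (inord 3)) H. simp C23.
have C21 := congr1 (fun A : 'M_((k.+4).+1) => A (inord 2) (inord 1)) H. simp C21.
have C31 := congr1 (fun A : 'M_((k.+4).+1) => A (inord 3) (inord 1)) H. simp C31.
have C32 := congr1 (fun A : 'M_((k.+4).+1) => A (inord 3) (inord 2)) H. simp C32.
rewrite [M]mx3_eta.
apply: (@alg _ (equiv_local k.+4)) => //.
move=> N; exists 1%:M; split; first exact: unitmx1.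
by move=> i _; rewrite invmx1 mul1mx mulmx1.
Qed.
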